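(* Let $d=4c_2-\alpha c_1$, $\ell=2c_2-\alpha c_1$, $x^*=\alpha/d$, $\hat x=\alpha/\ell$, $\delta^\sharp=\frac{d^2}{8c_2\ell+d^2}$. For every $\delta\in(0,1)$ there exists $\bar x\in(x^*,\hat x]$ such that the trigger strategy profile with cooperative level $\bar x$ is a subgame perfect equilibrium of $G^\infty(\delta)$; explicitly one may take $\bar x=\hat x$ if $\delta\ge\delta^\sharp$ and $\bar x=\frac{\alpha}{d}\cdot\frac{d^2-\delta\alpha^2c_1^2+32\delta c_2^2}{d^2-\delta\alpha^2c_1^2}$ if $\delta<\delta^\sharp$.
   Context: Fix real numbers $\alpha>0$, $c_1\in[0,\tfrac{2}{\alpha}]$ and $c_2\in[\tfrac32,2]$. The stage game $G$ (Partnership Game) has two players $i=1,2$; player $i$ chooses an effort level $x_i\in[0,\alpha]$, choices being simultaneous. Player $i$'s payoff is $$u_i(x_1,x_2)=\alpha\Big(\frac{x_1+x_2}{2}+c_1\frac{x_1x_2}{2}\Big)-c_2x_i^2 .$$ The Nash equilibrium effort of $G$ is $x^*=\frac{\alpha}{4c_2-\alpha c_1}$. For $\delta\in(0,1)$, $G^\infty(\delta)$ denotes the infinitely repeated game with perfect monitoring in which $G$ is played in periods $t=1,2,\dots$, each player observes all past action profiles, and player $i$'s payoff from a play $(a^t)_{t\ge1}$ is $\sum_{t\ge1}\delta^{t-1}u_i(a^t)$. For $\bar x\in[0,\alpha]$, the trigger strategy with cooperative level $\bar x$ is the strategy which, after history $h^t=(a^1,\dots,a^{t-1})$, plays $\bar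 x$ if $t=1$ or $a^s=(\bar x,\bar x)$ for all $s<t$, and plays $x^*$ otherwise. *)

(* Defs.v *)
From Stdlib Require Import Reals Lra List.
Import ListNotations.
Open Scope R_scope.

Inductive player := P1 | P2.

Definition profile := (R * R)%type.

Definition u (alpha c1 c2 : R) (i : player) (a : profile) : R :=
  let (x1, x2) := a in
  alpha * ((x1 + x2) / 2 + c1 * (x1 * x2) / 2)
  - c2 * (match i with P1 => x1 | P2 => x2 end) ^ 2.

(* Histories: the list of past action profiles in chronological order
   (a^1, ..., a^{t-1}); the empty list is the initial history. *)
Definition history := list profile.

Definition strategy := history -> R.

Definition feasible_action (alpha x : R) : Prop := 0 <= x <= alpha.

Definition feasible_strategy (alpha : R) (s : strategy) : Prop :=
  forall h, feasible_action alpha (s h).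

Definition feasible_history (alpha : R) (h : history) : Prop :=
  Forall (fun a => feasible_action alpha (fst a) /\ feasible_action alpha (snd a)) h.

Fixpoint hist_after (h : history) (s1 s2 : strategy) (k : nat) : history :=
  match k with
  | O => h
  | S k' => let hk := hist_after h s1 s2 k' in hk ++ [(s1 hk, s2 hk)]
  end.

Definition outcome (h : history) (s1 s2 : strategy) (k : nat) : profile :=
  let hk := hist_after h s1 s2 k in (s1 hk, s2 hk).

Definition cont_term (alpha c1 c2 delta : R) (i : player) (h : history)
  (s1 s2 : strategy) (k : nat) : R :=
  delta ^ k * u alpha c1 c2 i (outcome h s1 s2 k).

(* Continuation payoffs are the sums of the series
   (which converge since payoffs are bounded on [0,alpha]^2). *)
Definition SPE (alpha c1 c2 delta : R) (s1 s2 : strategy) : Prop :=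
  feasible_strategy alpha s1 /\ feasible_strategy alpha s2 /\
  forall h : history, feasible_history alpha h ->
    (forall s' : strategy, feasible_strategy alpha s' ->
       forall v v' : R,
         infinite_sum (cont_term alpha c1 c2 delta P1 h s1 s2) v ->
         infinite_sum (cont_term alpha c1 c2 delta P1 h s' s2) v' ->
         v' <= v) /\
    (forall s' : strategy, feasible_strategy alpha s' ->
       forall v v' : R,
         infinite_sum (cont_term alpha c1 c2 delta P2 h s1 s2) v ->
         infinite_sum (cont_term alpha c1 c2 delta P2 h s1 s') v' ->
         v' <= v).

(* Nash equilibrium effort of the stage game. *)
Definition xstar (alpha c1 c2 : R) : R := alpha / (4 * c2 - alpha * c1).

Fixpoint all_coop (xbar : R) (h : history) : bool :=
  match h with
  | [] => true
  | (a1, a2) :: t =>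
      if Req_EM_T a1 xbar then
        if Req_EM_T a2 xbar then all_coop xbar t else false
      else false
  end.

Definition trigger (alpha c1 c2 xbar : R) : strategy :=
  fun h => if all_coop xbar h then xbar else xstar alpha c1 c2.

(* Main.v *)
Require Import Defs.
From Stdlib Require Import Reals.
From Stdlib Require Import Lra Psatz List.
Import ListNotations.
Open Scope R_scope.

Lemma all_coop_app y h a1 a2 :
  all_coop y (h ++ [(a1,a2)]) =
  andb (all_coop y h) (if Req_EM_T a1 y then if Req_EM_T a2 y then true else false else false).
Proof.
  induction h as [|[b1 b2] t IH]; simpl.
  - destruct (Req_EM_T a1 y); destruct (Req_EM_T a2 y); reflexivity.
  - destruct (Req_EM_T b1 y); destruct (Req_EM_T b2 y); simpl; auto.
Qed.

Lemma tele_le (f g : nat -> R) : (forall k, f k <= g k - g (S k)) ->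
  forall N, sum_f_R0 f N <= g O - g (S N).
Proof. intros H N; induction N; simpl; [apply H|]. specialize (H (S N)); lra. Qed.

Lemma tele_eq (f g : nat -> R) : (forall k, f k = g k - g (S k)) ->
  forall N, sum_f_R0 f N = g O - g (S N).
Proof. intros H N; induction N; simpl; [apply H|]. specialize (H (S N)); lra. Qed.

Lemma lim_le (f : nat -> R) v A K delta : 0 <= delta < 1 -> 0 <= K ->
  infinite_sum f v -> (forall N, sum_f_R0 f N <= A + delta ^ (S N) * K) -> v <= A.
Proof.
  intros Hd HK Hs HN.
  destruct (Rle_or_lt v A) as [|Hlt]; [assumption|exfalso].
  set (e := (v - A)/2).
  assert (He : 0 < e) by (unfold e; lra).
  destruct (Hs e He) as [N1 HN1].
  assert (Hr : Rabs delta < 1) by (rewrite Rabs_right; lra).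
  destruct (pow_lt_1_zero delta Hr (e/(K+1))) as [N2 HN2].
  { apply Rdiv_lt_0_compat; lra. }
  set (N := max N1 N2).
  specialize (HN1 N ltac:(lia)). specialize (HN2 (S N) ltac:(lia)). specialize (HN N).
  unfold R_dist in HN1. apply Rabs_def2 in HN1.
  assert (Hp : 0 <= delta ^ (S N)) by (apply pow_le; lra).
  rewrite Rabs_right in HN2 by lra.
  assert (delta ^ (S N) * (K+1) < e).
  { apply Rmult_lt_reg_r with (/(K+1)). apply Rinv_0_lt_compat; lra.
    rewrite Rmult_assoc, Rinv_r by lra. rewrite Rmult_1_r. exact HN2. }
  assert (delta ^ (S N) * K <= delta ^ (S N) * (K+1)) by (apply Rmult_le_compat_l; lra).
  unfold e in *; lra.
Qed.

Lemma lim_ge (f : nat -> R) v A K delta : 0 <= delta < 1 -> 0 <= K ->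
  infinite_sum f v -> (forall N, A - delta ^ (S N) * K <= sum_f_R0 f N) -> A <= v.
Proof.
  intros Hd HK Hs HN.
  destruct (Rle_or_lt A v) as [|Hlt]; [assumption|exfalso].
  set (e := (A - v)/2).
  assert (He : 0 < e) by (unfold e; lra).
  destruct (Hs e He) as [N1 HN1].
  assert (Hr : Rabs delta < 1) by (rewrite Rabs_right; lra).
  destruct (pow_lt_1_zero delta Hr (e/(K+1))) as [N2 HN2].
  { apply Rdiv_lt_0_compat; lra. }
  set (N := max N1 N2).
  specialize (HN1 N ltac:(lia)). specialize (HN2 (S N) ltac:(lia)). specialize (HN N).
  unfold R_dist in HN1. apply Rabs_def2 in HN1.
  assert (Hp : 0 <= delta ^ (S N)) by (apply pow_le; lra).
  rewrite Rabs_right in HN2 by lra.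
  assert (delta ^ (S N) * (K+1) < e).
  { apply Rmult_lt_reg_r with (/(K+1)). apply Rinv_0_lt_compat; lra.
    rewrite Rmult_assoc, Rinv_r by lra. rewrite Rmult_1_r. exact HN2. }
  assert (delta ^ (S N) * K <= delta ^ (S N) * (K+1)) by (apply Rmult_le_compat_l; lra).
  unfold e in *; lra.
Qed.

Definition Mf a c1 c2 w := (a*(1+c1*w))^2/(16*c2) + a*w/2.

Lemma U_le_M a c1 c2 z w : 0 < c2 -> u a c1 c2 P1 (z,w) <= Mf a c1 c2 w.
Proof.
  intros Hc. unfold u, Mf; cbv beta iota.
  assert (Hsq: 0 <= c2 * (z - a*(1+c1*w)/(4*c2))^2)
    by (apply Rmult_le_pos; [lra| apply pow2_ge_0]).
  assert (Hid : (a*(1+c1*w))^2/(16*c2) + a*w/2 - (a*((z+w)/2 + c1*(z*w)/2) - c2*z^2)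
     = c2 * (z - a*(1+c1*w)/(4*c2))^2) by (field; lra).
  lra.
Qed.

Lemma u_sym a c1 c2 z w : u a c1 c2 P2 (w,z) = u a c1 c2 P1 (z,w).
Proof. unfold u; cbv beta iota. field. Qed.

Definition Vf a c1 c2 delta y (h : history) : R :=
  if all_coop y h then u a c1 c2 P1 (y,y) / (1-delta)
  else u a c1 c2 P1 (xstar a c1 c2, xstar a c1 c2) / (1 - delta).

Lemma stage_core a c1 c2 delta y (b : bool) z w :
  0 < delta < 1 -> 0 < c2 ->
  Mf a c1 c2 (xstar a c1 c2) = u a c1 c2 P1 (xstar a c1 c2, xstar a c1 c2) ->
  (1-delta) * Mf a c1 c2 y + delta * u a c1 c2 P1 (xstar a c1 c2, xstar a c1 c2)
     <= u a c1 c2 P1 (y,y) ->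
  w = (if b then y else xstar a c1 c2) ->
  let V := fun b : bool => if b then u a c1 c2 P1 (y,y) / (1-delta)
        else u a c1 c2 P1 (xstar a c1 c2, xstar a c1 c2) / (1 - delta) in
  u a c1 c2 P1 (z, w) + delta * V (andb b (if Req_EM_T z y then if Req_EM_T w y then true else false else false)) <= V b
  /\ (z = w -> u a c1 c2 P1 (z, w) + delta * V (andb b (if Req_EM_T z y then if Req_EM_T w y then true else false else false)) = V b).
Proof.
  intros Hd Hc HM Hic Hw V. unfold V.
  set (xs := xstar a c1 c2) in *.
  set (Us := u a c1 c2 P1 (xs,xs)) in *. set (Uy := u a c1 c2 P1 (y,y)) in *.
  destruct b; cbv beta iota delta [andb] in *; subst w.
  - destruct (Req_EM_T z y) as [->|Hne].
    + destruct (Req_EM_T y y) as [_|C]; [|congruence]; cbv beta iota delta [andb].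
      fold Uy. split; [|intros _]; apply Req_le || idtac; field; lra.
    + assert (Hz := U_le_M a c1 c2 z y Hc).
      assert (Mf a c1 c2 y <= (Uy - delta*Us)/(1-delta)).
      { apply Rmult_le_reg_r with (1-delta); [lra|].
        unfold Rdiv; rewrite Rmult_assoc, Rinv_l by lra. lra. }
      assert (Uy/(1-delta) - delta*(Us/(1-delta)) = (Uy - delta*Us)/(1-delta)) by (field; lra).
      cbv beta iota delta [andb]; split; [lra | intros; congruence].
  - assert (Hz := U_le_M a c1 c2 z xs Hc).
    assert (Us + delta * (Us/(1-delta)) = Us/(1-delta)) by (field; lra).
    split; [lra|]. intros ->. fold Us. lra.
Qed.


Lemma stage1 a c1 c2 delta y H z :
  0 < delta < 1 -> 0 < c2 ->
  Mf a c1 c2 (xstar a c1 c2) = u a c1 c2 P1 (xstar a c1 c2, xstar a c1 c2) ->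
  (1-delta) * Mf a c1 c2 y + delta * u a c1 c2 P1 (xstar a c1 c2, xstar a c1 c2)
     <= u a c1 c2 P1 (y,y) ->
  u a c1 c2 P1 (z, trigger a c1 c2 y H) + delta * Vf a c1 c2 delta y (H ++ [(z, trigger a c1 c2 y H)])
   <= Vf a c1 c2 delta y H /\
  (z = trigger a c1 c2 y H ->
  u a c1 c2 P1 (z, trigger a c1 c2 y H) + delta * Vf a c1 c2 delta y (H ++ [(z, trigger a c1 c2 y H)])
   = Vf a c1 c2 delta y H).
Proof.
  intros Hd Hc HM Hic. unfold Vf. rewrite all_coop_app.
  exact (stage_core a c1 c2 delta y (all_coop y H) z (trigger a c1 c2 y H) Hd Hc HM Hic eq_refl).
Qed.

Lemma stage2 a c1 c2 delta y H z :
  0 < delta < 1 -> 0 < c2 ->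
  Mf a c1 c2 (xstar a c1 c2) = u a c1 c2 P1 (xstar a c1 c2, xstar a c1 c2) ->
  (1-delta) * Mf a c1 c2 y + delta * u a c1 c2 P1 (xstar a c1 c2, xstar a c1 c2)
     <= u a c1 c2 P1 (y,y) ->
  u a c1 c2 P2 (trigger a c1 c2 y H, z) + delta * Vf a c1 c2 delta y (H ++ [(trigger a c1 c2 y H, z)])
   <= Vf a c1 c2 delta y H /\
  (z = trigger a c1 c2 y H ->
  u a c1 c2 P2 (trigger a c1 c2 y H, z) + delta * Vf a c1 c2 delta y (H ++ [(trigger a c1 c2 y H, z)])
   = Vf a c1 c2 delta y H).
Proof.
  intros Hd Hc HM Hic. unfold Vf. rewrite all_coop_app, u_sym.
  pose proof (stage_core a c1 c2 delta y (all_coop y H) z (trigger a c1 c2 y H) Hd Hc HM Hic eq_refl) as S.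
  cbv zeta in S.
  replace (if Req_EM_T (trigger a c1 c2 y H) y then if Req_EM_T z y then true else false else false)
    with (if Req_EM_T z y then if Req_EM_T (trigger a c1 c2 y H) y then true else false else false).
  exact S.
  destruct (Req_EM_T z y); destruct (Req_EM_T (trigger a c1 c2 y H) y); reflexivity.
Qed.

Lemma dev_le a c1 c2 delta i (V : history -> R) (s1 s2 : strategy) h :
  0 <= delta ->
  (forall H, u a c1 c2 i (s1 H, s2 H) + delta * V (H ++ [(s1 H, s2 H)]) <= V H) ->
  forall N, sum_f_R0 (cont_term a c1 c2 delta i h s1 s2) N
     <= V h - delta ^ (S N) * V (hist_after h s1 s2 (S N)).
Proof.
  intros Hd HS N.
  pose proof (tele_le (cont_term a c1 c2 delta i h s1 s2)
     (fun k => delta ^ k * V (hist_after h s1 s2 k))) as T.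
  replace (V h) with (delta ^ 0 * V (hist_after h s1 s2 0)) by (simpl; ring).
  apply T. intros k. unfold cont_term, outcome.
  change (hist_after h s1 s2 (S k)) with
    (hist_after h s1 s2 k ++ [(s1 (hist_after h s1 s2 k), s2 (hist_after h s1 s2 k))]).
  specialize (HS (hist_after h s1 s2 k)).
  assert (0 <= delta ^ k) by (apply pow_le; lra).
  simpl pow at 3.
  apply Rmult_le_compat_l with (r := delta ^ k) in HS; [|lra]. lra.
Qed.

Lemma dev_eq a c1 c2 delta i (V : history -> R) (s1 s2 : strategy) h :
  (forall H, u a c1 c2 i (s1 H, s2 H) + delta * V (H ++ [(s1 H, s2 H)]) = V H) ->
  forall N, sum_f_R0 (cont_term a c1 c2 delta i h s1 s2) N
     = V h - delta ^ (S N) * V (hist_after h s1 s2 (S N)).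
Proof.
  intros HS N.
  pose proof (tele_eq (cont_term a c1 c2 delta i h s1 s2)
     (fun k => delta ^ k * V (hist_after h s1 s2 k))) as T.
  replace (V h) with (delta ^ 0 * V (hist_after h s1 s2 0)) by (simpl; ring).
  apply T. intros k. unfold cont_term, outcome.
  change (hist_after h s1 s2 (S k)) with
    (hist_after h s1 s2 k ++ [(s1 (hist_after h s1 s2 k), s2 (hist_after h s1 s2 k))]).
  specialize (HS (hist_after h s1 s2 k)).
  simpl pow at 3. rewrite <- HS. ring.
Qed.

Lemma Vf_bound a c1 c2 delta y h :
  let K := Rabs (u a c1 c2 P1 (y,y) / (1-delta)) +
           Rabs (u a c1 c2 P1 (xstar a c1 c2, xstar a c1 c2) / (1 - delta)) in
  - K <= Vf a c1 c2 delta y h <= K.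
Proof.
  intros K. unfold K, Vf.
  set (A := u a c1 c2 P1 (y,y) / (1-delta)).
  set (B := u a c1 c2 P1 (xstar a c1 c2, xstar a c1 c2) / (1 - delta)).
  pose proof (Rle_abs A). pose proof (Rle_abs (-A)). rewrite Rabs_Ropp in *.
  pose proof (Rle_abs B). pose proof (Rle_abs (-B)). rewrite Rabs_Ropp in *.
  pose proof (Rabs_pos A). pose proof (Rabs_pos B).
  destruct (all_coop y h); lra.
Qed.

Lemma spe_trigger a c1 c2 delta y :
  0 < delta < 1 -> 0 < c2 -> 0 <= y <= a -> 0 <= xstar a c1 c2 <= a ->
  Mf a c1 c2 (xstar a c1 c2) = u a c1 c2 P1 (xstar a c1 c2, xstar a c1 c2) ->
  (1-delta) * Mf a c1 c2 y + delta * u a c1 c2 P1 (xstar a c1 c2, xstar a c1 c2)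
     <= u a c1 c2 P1 (y,y) ->
  SPE a c1 c2 delta (trigger a c1 c2 y) (trigger a c1 c2 y).
Proof.
  intros Hd Hc Hy Hx HM Hic.
  assert (Hf : feasible_strategy a (trigger a c1 c2 y)).
  { intros h. unfold trigger, feasible_action. destruct (all_coop y h); lra. }
  set (K := Rabs (u a c1 c2 P1 (y,y) / (1-delta)) +
           Rabs (u a c1 c2 P1 (xstar a c1 c2, xstar a c1 c2) / (1 - delta))).
  assert (HK : 0 <= K) by (unfold K; pose proof (Rabs_pos (u a c1 c2 P1 (y,y) / (1-delta)));
     pose proof (Rabs_pos (u a c1 c2 P1 (xstar a c1 c2, xstar a c1 c2) / (1 - delta))); lra).
  assert (Hdd : 0 <= delta < 1) by lra.
  split; [exact Hf|split; [exact Hf|]].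
  intros h _; split; intros s' _ v v' Hv Hv'.
  - apply Rle_trans with (Vf a c1 c2 delta y h).
    + apply (lim_le _ v' _ K delta Hdd HK Hv'). intros N.
      rewrite (dev_le a c1 c2 delta P1 (Vf a c1 c2 delta y) s' (trigger a c1 c2 y) h ltac:(lra)
        (fun H => proj1 (stage1 a c1 c2 delta y H (s' H) Hd Hc HM Hic)) N).
      pose proof (Vf_bound a c1 c2 delta y (hist_after h s' (trigger a c1 c2 y) (S N))) as B.
      cbv zeta in B. fold K in B.
      assert (0 <= delta ^ (S N)) by (apply pow_le; lra). nra.
    + apply (lim_ge _ v _ K delta Hdd HK Hv). intros N.
      rewrite (dev_eq a c1 c2 delta P1 (Vf a c1 c2 delta y) (trigger a c1 c2 y) (trigger a c1 c2 y) h
        (fun H => proj2 (stage1 a c1 c2 delta y H _ Hd Hc HM Hic) eq_refl) N).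
      pose proof (Vf_bound a c1 c2 delta y (hist_after h (trigger a c1 c2 y) (trigger a c1 c2 y) (S N))) as B.
      cbv zeta in B. fold K in B.
      assert (0 <= delta ^ (S N)) by (apply pow_le; lra). nra.
  - apply Rle_trans with (Vf a c1 c2 delta y h).
    + apply (lim_le _ v' _ K delta Hdd HK Hv'). intros N.
      rewrite (dev_le a c1 c2 delta P2 (Vf a c1 c2 delta y) (trigger a c1 c2 y) s' h ltac:(lra)
        (fun H => proj1 (stage2 a c1 c2 delta y H (s' H) Hd Hc HM Hic)) N).
      pose proof (Vf_bound a c1 c2 delta y (hist_after h (trigger a c1 c2 y) s' (S N))) as B.
      cbv zeta in B. fold K in B.
      assert (0 <= delta ^ (S N)) by (apply pow_le; lra). nra.
    + apply (lim_ge _ v _ K delta Hdd HK Hv). intros N.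
      rewrite (dev_eq a c1 c2 delta P2 (Vf a c1 c2 delta y) (trigger a c1 c2 y) (trigger a c1 c2 y) h
        (fun H => proj2 (stage2 a c1 c2 delta y H _ Hd Hc HM Hic) eq_refl) N).
      pose proof (Vf_bound a c1 c2 delta y (hist_after h (trigger a c1 c2 y) (trigger a c1 c2 y) (S N))) as B.
      cbv zeta in B. fold K in B.
      assert (0 <= delta ^ (S N)) by (apply pow_le; lra). nra.
Qed.

Lemma ic_identity a c1 c2 delta y :
  0 < c2 -> 4 * c2 - a * c1 <> 0 ->
  u a c1 c2 P1 (y,y) - delta * u a c1 c2 P1 (xstar a c1 c2, xstar a c1 c2)
   - (1-delta) * Mf a c1 c2 y
  = (y - a/(4*c2 - a*c1))/(16*c2) *
    (32*delta*c2^2*a/(4*c2 - a*c1) - (y - a/(4*c2 - a*c1)) * ((4*c2 - a*c1)^2 - delta*a^2*c1^2)).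
Proof. intros Hc Hd. unfold u, Mf, xstar; cbv beta iota. field. split; lra. Qed.

Lemma M_xs a c1 c2 : 0 < c2 -> 4 * c2 - a * c1 <> 0 ->
  Mf a c1 c2 (xstar a c1 c2) = u a c1 c2 P1 (xstar a c1 c2, xstar a c1 c2).
Proof. intros Hc Hd. unfold u, Mf, xstar; cbv beta iota. field. split; lra. Qed.

Theorem corollary2 (alpha c1 c2 : R)
  (halpha : 0 < alpha) (hc1 : 0 <= c1 <= 2 / alpha) (hc2 : 3 / 2 <= c2 <= 2)
  (delta : R) (hdelta : 0 < delta < 1) :
  let d := 4 * c2 - alpha * c1 in
  let l := 2 * c2 - alpha * c1 in
  let xs := alpha / d in
  let xhat := alpha / l in
  let dsharp := d ^ 2 / (8 * c2 * l + d ^ 2) in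
  exists xbar : R,
    xs < xbar <= xhat /\
    SPE alpha c1 c2 delta (trigger alpha c1 c2 xbar) (trigger alpha c1 c2 xbar) /\
    (dsharp <= delta -> xbar = xhat) /\
    (delta < dsharp ->
       xbar = alpha / d *
              ((d ^ 2 - delta * alpha ^ 2 * c1 ^ 2 + 32 * delta * c2 ^ 2)
               / (d ^ 2 - delta * alpha ^ 2 * c1 ^ 2))).
Proof.
  intros d l xs xhat dsharp.
  assert (Hdef : d = 4*c2 - alpha*c1) by reflexivity.
  assert (Hldef : l = 2*c2 - alpha*c1) by reflexivity.
  assert (Hxs : xs = alpha/d) by reflexivity.
  assert (Hxh : xhat = alpha/l) by reflexivity.
  assert (Hds : dsharp = d^2/(8*c2*l + d^2)) by reflexivity.
  assert (Hxst : xstar alpha c1 c2 = xs) by reflexivity.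
  clearbody d l xs xhat dsharp.
  assert (Hac : alpha * c1 <= 2).
  { destruct hc1 as [h0 h1]. apply Rmult_le_compat_l with (r:=alpha) in h1; [|lra].
    replace (alpha * (2/alpha)) with 2 in h1 by (field; lra). lra. }
  assert (Hac0 : 0 <= alpha*c1) by (apply Rmult_le_pos; lra).
  assert (Hd4 : 4 <= d) by lra.
  assert (Hl1 : 1 <= l) by lra.
  assert (Hc2 : 0 < c2) by lra.
  assert (Hid : d^2 = 8*c2*l + (alpha*c1)^2) by (rewrite Hdef, Hldef; ring).
  set (E := d^2 - delta*alpha^2*c1^2).
  assert (HE : 0 < E).
  { unfold E. replace (delta*alpha^2*c1^2) with (delta*(alpha*c1)^2) by ring.
    assert ((alpha*c1)^2 <= 4) by nra. assert (16 <= d^2) by nra. nra. }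
  assert (Hxs0 : 0 < xs) by (rewrite Hxs; apply Rdiv_lt_0_compat; lra).
  assert (Hxsa : xs <= alpha).
  { rewrite Hxs. unfold Rdiv. rewrite <- (Rmult_1_r alpha) at 2.
    apply Rmult_le_compat_l; [lra|]. rewrite <- Rinv_1. apply Rinv_le_contravar; lra. }
  assert (Hxha : xhat <= alpha).
  { rewrite Hxh. unfold Rdiv. rewrite <- (Rmult_1_r alpha) at 2.
    apply Rmult_le_compat_l; [lra|]. rewrite <- Rinv_1. apply Rinv_le_contravar; lra. }
  assert (Hsuff : forall y, xs < y <= xhat -> (y - xs) * E <= 32*delta*c2^2*alpha/d ->
            SPE alpha c1 c2 delta (trigger alpha c1 c2 y) (trigger alpha c1 c2 y)).
  { intros y Hy Hb. apply spe_trigger; try lra.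
    - apply M_xs; lra.
    - pose proof (ic_identity alpha c1 c2 delta y Hc2 ltac:(lra)) as I.
      rewrite <- Hdef, <- Hxs, Hxst in I. fold E in I.
      assert (0 <= (y - xs) / (16*c2) * (32*delta*c2^2*alpha/d - (y - xs) * E)).
      { apply Rmult_le_pos; [apply Rlt_le, Rdiv_lt_0_compat; lra | lra]. }
      rewrite Hxst. lra. }
  assert (Hxsxh : xhat - xs = 2*c2*alpha/(l*d)) by (rewrite Hxh, Hxs, Hdef, Hldef; field; split; lra).
  assert (Hpos : 0 < 2*c2*alpha/(l*d)) by (apply Rdiv_lt_0_compat; nra).
  destruct (Rle_lt_dec dsharp delta) as [Hge|Hlt].
  - exists xhat.
    assert (H1 : d^2 <= delta * (8*c2*l + d^2)).
    { rewrite Hds in Hge. apply Rmult_le_compat_r with (r := 8*c2*l+d^2) in Hge; [|nra].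
      unfold Rdiv in Hge. rewrite Rmult_assoc, Rinv_l in Hge by nra. lra. }
    split; [lra|]. split; [|split; [auto| intros; lra]].
    apply Hsuff; [lra|].
    assert (I : 32*delta*c2^2*alpha/d - (xhat - xs)*E = 2*c2*alpha/(l*d) * (16*delta*c2*l - E)).
    { rewrite Hxsxh. field. lra. }
    assert (0 <= 16*delta*c2*l - E).
    { unfold E. replace (delta*alpha^2*c1^2) with (delta*(alpha*c1)^2) by ring. nra. }
    assert (0 <= 2*c2*alpha/(l*d) * (16*delta*c2*l - E)) by (apply Rmult_le_pos; lra).
    lra.
  - set (y := alpha / d * ((d ^ 2 - delta * alpha ^ 2 * c1 ^ 2 + 32 * delta * c2 ^ 2)
               / (d ^ 2 - delta * alpha ^ 2 * c1 ^ 2))).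
    exists y.
    assert (H1 : delta * (8*c2*l + d^2) < d^2).
    { rewrite Hds in Hlt. apply Rmult_lt_compat_r with (r := 8*c2*l+d^2) in Hlt; [|nra].
      replace (d ^ 2 / (8 * c2 * l + d ^ 2) * (8 * c2 * l + d ^ 2)) with (d^2) in Hlt by (field; nra). lra. }
    assert (Hy : y - xs = 32*delta*c2^2*alpha/(d*E)).
    { unfold y. fold E. rewrite Hxs. field. lra. }
    assert (Hp : 0 < 32*delta*c2^2*alpha/(d*E)).
    { apply Rdiv_lt_0_compat; [|nra]. assert (0 < c2^2) by nra.
      repeat apply Rmult_lt_0_compat; lra. }
    assert (Hyh : xhat - y = 2*c2*alpha/(l*d*E) * (E - 16*delta*c2*l)).
    { replace (xhat - y) with ((xhat - xs) - (y - xs)) by ring. rewrite Hxsxh, Hy. field. lra. }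
    assert (0 < E - 16*delta*c2*l).
    { unfold E. replace (delta*alpha^2*c1^2) with (delta*(alpha*c1)^2) by ring. nra. }
    assert (0 <= 2*c2*alpha/(l*d*E) * (E - 16*delta*c2*l)).
    { apply Rmult_le_pos; [|lra]. apply Rlt_le, Rdiv_lt_0_compat; [nra|].
      apply Rmult_lt_0_compat; nra. }
    split; [lra|]. split; [|split; [intros; lra| reflexivity]].
    apply Hsuff; [lra|].
    rewrite Hy. right. field. lra.
Qed.
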